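(* The distribution of a consistent sequence of exchangeable random permutations $(\boldsymbol\pi_n)_{n\geq1}$ is determined by the following predictive scheme. For any $\pi\in\mathcal S_n$ with $\mathrm{c}(\pi)=(n_1,\dots,n_k)$, if $\sigma^{(j)}\in\mathcal A(\pi)\subset\mathcal S_{n+1}$ is such that $z_{n+1}(\sigma^{(j)})=j$, then $$P(\boldsymbol\pi_{n+1}=\sigma^{(j)}\mid\boldsymbol\pi_n=\pi)=\begin{cases}\frac{1}{n_j}\frac{\varphi_k^{(n+1)}(n_1,\dots,n_j+1,\dots,n_k)}{\varphi_k^{(n)}(n_1,\dots,n_k)}&1\leq j\leq k\\ \frac{\varphi_{k+1}^{(n+1)}(n_1,\dots,n_k,1)}{\varphi_k^{(n)}(n_1,\dots,n_k)}&j=k+1\end{cases}$$ where $(\varphi^{(n)})_{n\geq1}$ is the EPPF of $(\mathrm{z}(\boldsymbol\pi_n))_{n\geq1}$. If $\sigma\notin\mathcal A(\pi)$, then $P(\boldsymbol\pi_{n+1}=\sigma\mid\boldsymbol\pi_n=\pi)=0$.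
   Context: $\mathcal S_n$ is the symmetric group on $[n]$. For $\pi\in\mathcal S_n$, $\mathrm{c}(\pi)$ is its vector of cycle lengths and $\mathrm{z}(\pi)=(z_1(\pi),\dots,z_n(\pi))$ its cycle structure, with $z_i(\pi)$ the ordinal of the cycle containing $i$ (cycles written starting from their least element and ordered by first elements, i.e. labels in order of appearance). The deletion map $\operatorname{del}:\mathcal S_{n+1}\to\mathcal S_n$ is $\operatorname{del}(\sigma)(i)=\sigma(i)$ if $i\neq\sigma^{-1}(n+1)$ and $\operatorname{del}(\sigma)(i)=\sigma(n+1)$ if $i=\sigma^{-1}(n+1)$; $\mathcal A(\pi)=\{\sigma\in\mathcal S_{n+1}:\operatorname{del}(\sigma)=\pi\}$ is the set of the $n+1$ permutations obtained by inserting $n+1$ into the cycle representation of $\pi$ (to the left of any element of an existing cycle, or as a new singleton cycle). A sequence $(\boldsymbol\pi_n)$, $\boldsymbol\pi_n\in\mathcal S_n$, is consistent if $\operatorname{del}(\boldsymbol\pi_{n+1})\overset{d}{=}\boldsymbol\pi_n$; each $\boldsymbol\pi_n$ is exchangeable, i.e. its pmf is $\varphi^{(n)}_k(n_1,\dots,n_k)/\prod_{j=1}^k(n_j-1)!$ for an EPPF $(\varphi^{(n)})$ (symmetric functions satisfying $\varphi^{(1)}_1(1)=1$ and $\varphi_k^{(n)}(n_1,\dots,n_k)=\sum_{j=1}^k\varphi_k^{(n+1)}(n_1,\dots,n_j+1,\dots,n_k)+\varphi_{k+1}^{(n+1)}(n_1,\dots,n_k,1)$), with $(n_1,\dots,n_k)$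 the cycle lengths. *)

(* Defs.v *)
From HB Require Import structures.
From mathcomp Require Import all_boot all_order all_algebra all_fingroup.
From mathcomp Require Import all_classical all_reals all_analysis.
Set Implicit Arguments. Unset Strict Implicit. Unset Printing Implicit Defensive.
Import Order.TTheory GRing.Theory Num.Theory.

(* Conventions: [n] = {1,...,n} is encoded by 'I_n = {0,...,n-1};
   the element n+1 of [n+1] is ord_max : 'I_n.+1. *)

Definition del_val n (s : {perm 'I_n.+1}) (i : 'I_n) : 'I_n.+1 :=
  if s (lift ord_max i) == ord_max then s ord_max else s (lift ord_max i).

Definition del_fun n (s : {perm 'I_n.+1}) (i : 'I_n) : 'I_n :=
  odflt i (unlift ord_max (del_val s i)).

Lemma del_val_neq n (s : {perm 'I_n.+1}) i : del_val s i != ord_max.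
Proof.
rewrite /del_val; case: ifP => [/eqP E|/negbT //].
apply/eqP => E'.
have E2 : s (lift ord_max i) = s ord_max by rewrite E E'.
move/perm_inj: E2 => E2.
by move: (neq_lift (@ord_max n) i); rewrite E2 eqxx.
Qed.

Lemma del_val_inj n (s : {perm 'I_n.+1}) : injective (del_val s).
Proof.
move=> i1 i2; rewrite /del_val.
case: ifP => H1; case: ifP => H2.
- move=> _; apply: (@lift_inj _ ord_max); apply: (@perm_inj _ s).
  by rewrite (eqP H1) (eqP H2).
- move/perm_inj => E; exfalso.
  by move: (neq_lift (@ord_max n) i2); rewrite -E eqxx.
- move/perm_inj => E; exfalso.
  by move: (neq_lift (@ord_max n) i1); rewrite E eqxx.
- by move/perm_inj/lift_inj.
Qed.

Lemma lift_del_fun n (s : {perm 'I_n.+1}) i :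
  lift ord_max (del_fun s i) = del_val s i.
Proof.
rewrite /del_fun; case: unliftP (del_val_neq s i) => [j ->|->] //=.
by rewrite eqxx.
Qed.

Lemma del_fun_inj n (s : {perm 'I_n.+1}) : injective (del_fun s).
Proof.
move=> i1 i2 E; apply: (@del_val_inj n s).
by rewrite -!lift_del_fun E.
Qed.

Definition del n (s : {perm 'I_n.+1}) : {perm 'I_n} := perm (@del_fun_inj n s).

Definition Aset n (p : {perm 'I_n}) : {set {perm 'I_n.+1}} :=
  [set s | del s == p].

Definition leader n (p : {perm 'I_n}) (i : 'I_n) : 'I_n :=
  [arg min_(j < i in porbit p i) (j : nat)].

Definition cycmins n (p : {perm 'I_n}) : seq 'I_n :=
  [seq i <- enum 'I_n | leader p i == i].

(* c(pi) : cycle lengths, cycles ordered by their least elements *)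
Definition cyclen n (p : {perm 'I_n}) : seq nat :=
  [seq #|porbit p i| | i <- cycmins p].

(* z_i(pi) : (1-based) ordinal of the cycle containing i *)
Definition zlab n (p : {perm 'I_n}) (i : 'I_n) : nat :=
  (index (leader p i) (cycmins p)).+1.

(* phi n s stands for phi^{(n)}_{size s}(s) *)
Definition composition (n : nat) (s : seq nat) : bool :=
  all (fun m => 0 < m)%N s && (sumn s == n).

Definition is_EPPF (R : realType) (phi : nat -> seq nat -> R) : Prop :=
  [/\ phi 1%N [:: 1%N] = 1%R,
      (forall n s t, composition n s -> perm_eq s t -> phi n s = phi n t) &
      (forall n s, (0 < n)%N -> composition n s ->
         phi n s = \sum_(j < size s) phi n.+1 (incr_nth s j)
                   + phi n.+1 (rcons s 1%N))%R].

Local Open Scope classical_set_scope.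
Local Open Scope ring_scope.

Definition condP d (T : measurableType d) (R : realType) (P : probability T R)
  (A B : set T) : R := fine (P (A `&` B)) / fine (P B).

(* Main.v *)
Require Import Defs.
From HB Require Import structures.
From mathcomp Require Import all_boot all_order all_algebra all_fingroup.
From mathcomp Require Import all_classical all_reals all_analysis.
From mathcomp Require Import ring lra.
Set Implicit Arguments. Unset Strict Implicit. Unset Printing Implicit Defensive.
Import Order.TTheory GRing.Theory Num.Theory.

Lemma porbit_trans (T : finType) (s : {perm T}) x y z :
  y \in porbit s x -> z \in porbit s y -> z \in porbit s x.
Proof. by rewrite -eq_porbit_mem => /eqP ->. Qed.

Lemma porbit_closed (T : finType) (s : {perm T}) (S : {set T}) x :
  x \in S -> (forall y, y \in S -> s y \in S) -> porbit s x \subset S.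
Proof.
move=> xS cS; apply/fintype.subsetP => y /porbitP [m ->]; rewrite permX.
by elim: m => //= m IH; apply: cS.
Qed.

Lemma porbit_step (T : finType) (s : {perm T}) x : s x \in porbit s x.
Proof. by have := mem_porbit s 1 x; rewrite expg1. Qed.

Section Leader.
Variables (m : nat) (q : {perm 'I_m}).

Lemma leader_in i : leader q i \in porbit q i.
Proof. by rewrite /leader; case: arg_minnP => //; exact: porbit_id. Qed.

Lemma leader_min i k : k \in porbit q i -> (leader q i <= k)%N.
Proof. by rewrite /leader; case: arg_minnP => [|l _ lmin]; [exact: porbit_id|exact: lmin]. Qed.

Lemma leaderP i j : j \in porbit q i -> (forall k, k \in porbit q i -> (j <= k)%N) ->
  leader q i = j.
Proof.
move=> ji jmin; apply/val_inj/eqP; rewrite eqn_leq leader_min //=.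
exact: jmin (leader_in i).
Qed.

Lemma leader_eq i j : porbit q i = porbit q j -> leader q i = leader q j.
Proof.
move=> E; apply: leaderP; first by rewrite E leader_in.
by move=> k; rewrite E; exact: leader_min.
Qed.

Lemma porbit_leader i : porbit q (leader q i) = porbit q i.
Proof. by apply/eqP; rewrite eq_porbit_mem leader_in. Qed.

Lemma leader_idem i : leader q (leader q i) = leader q i.
Proof. by apply: leader_eq; rewrite porbit_leader. Qed.

Lemma leader_in_cycmins i : leader q i \in cycmins q.
Proof. by rewrite mem_filter leader_idem eqxx mem_enum. Qed.

Lemma uniq_cycmins : uniq (cycmins q).
Proof. by rewrite filter_uniq ?enum_uniq. Qed.

Lemma mem_porbit_cycmins i a : i \in cycmins q -> (a \in porbit q i) = (i == leader q a).
Proof.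
rewrite mem_filter => /andP [/eqP li _]; apply/idP/eqP => [ai|->].
  by rewrite -li; apply: leader_eq; apply/eqP; rewrite eq_porbit_mem porbit_sym.
by rewrite porbit_sym leader_in.
Qed.
End Leader.

Lemma incr_nth_map (T : eqType) (f : T -> nat) (l : T) (r : seq T) :
  uniq r -> l \in r ->
  map (fun i => f i + (i == l)) r = incr_nth (map f r) (index l r).
Proof.
elim: r => //= x r IH /andP [xr ur]; rewrite inE; case: (eqVneq x l) => [E _|xl /= lr].
  subst x; rewrite addn1 /=; congr (_ :: _); apply/eq_in_map => i ir.
  have H : i != l by apply: contraNneq xr => <-.
  by rewrite (negbTE H) addn0.
by rewrite addn0 IH.
Qed.

Lemma prod_incr (T : eqType) (f : T -> nat) (l : T) (r : seq T) :
  uniq r -> l \in r -> (0 < f l)%N ->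
  (\prod_(i <- r) (f i + (i == l)).-1`! = (\prod_(i <- r) (f i).-1`!) * f l)%N.
Proof.
move=> ur lr fl; rewrite (bigD1_seq l) //= (bigD1_seq l) //= eqxx addn1.
rewrite mulnAC; congr (_ * _); last first.
  apply: eq_bigr => i /negbTE ->; by rewrite addn0.
by case: (f l) fl => // k _; rewrite factS mulnC.
Qed.

Section Comb.
Variable n : nat.
Variable s : {perm 'I_n.+1}.
Local Notation p := (del s).
Local Notation lf := (lift ord_max).

Lemma delE i : lf (p i) = if s (lf i) == ord_max then s ord_max else s (lf i).
Proof. by rewrite /del permE lift_del_fun. Qed.

Lemma step z : lf (p z) \in porbit s (lf z).
Proof.
rewrite delE; case: eqP => [E|_]; last by exact: porbit_step.
by have := mem_porbit s 2 (lf z); rewrite expgS expg1 permM E.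
Qed.

Lemma lift_porbit i y : y \in porbit p i -> lf y \in porbit s (lf i).
Proof.
move=> /porbitP [m ->]; rewrite permX; elim: m => [|m IH] /=; first exact: porbit_id.
exact: porbit_trans IH (step _).
Qed.

Definition bb i := [exists z in porbit p i, s (lf z) == ord_max].
Definition SS i : {set 'I_n.+1} := lf @: porbit p i :|: [set x | (x == ord_max) && bb i].

Lemma porbit_lift i : porbit s (lf i) = SS i.
Proof.
apply/eqP; rewrite finset.eqEsubset; apply/andP; split.
  apply: porbit_closed; first by rewrite inE imset_f ?porbit_id.
  move=> y; rewrite !inE => /orP [/imsetP [z zi ->]|/andP [/eqP -> /existsP [z /andP [zi /eqP sz]]]].
    case: (eqVneq (s (lf z)) ord_max) => sz.
      by rewrite sz /=; apply/orP; right; apply/existsP; exists z; rewrite zi sz eqxx.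
    have := delE z; rewrite (negbTE sz) => <-.
    by rewrite imset_f // (porbit_trans zi) // porbit_step.
  have := delE z; rewrite sz eqxx => <-.
  by rewrite imset_f // (porbit_trans zi) // porbit_step.
apply/fintype.subsetP => y; rewrite !inE => /orP [/imsetP [z zi ->]|/andP [/eqP -> /existsP [z /andP [zi /eqP sz]]]].
  exact: lift_porbit.
by have := porbit_trans (lift_porbit zi) (porbit_step s (lf z)); rewrite sz.
Qed.

Lemma card_porbit_lift i : #|porbit s (lf i)| = #|porbit p i| + bb i.
Proof.
rewrite porbit_lift /SS cardsU.
have -> : lf @: porbit p i :&: [set x | (x == ord_max) && bb i] = finset.set0.
  apply/setP => x; rewrite !inE; apply/negbTE; apply/andP => [[/imsetP [z _ ->]]].
  by rewrite eq_sym (negbTE (neq_lift _ _)).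
rewrite cards0 subn0 card_imset; last exact: lift_inj.
congr (_ + _); case: (bb i); last by apply/eqP; rewrite cards_eq0; apply/eqP/setP => x; rewrite !inE andbF.
by rewrite (_ : [set x | _] = [set ord_max]) ?cards1 //; apply/setP => x; rewrite !inE andbT.
Qed.


Lemma lf_val (i : 'I_n) : (lf i : nat) = i.
Proof. exact: lift_max. Qed.

Lemma leader_lift i : leader s (lf i) = lf (leader p i).
Proof.
apply: leaderP; first exact/lift_porbit/leader_in.
move=> k; rewrite porbit_lift !inE => /orP [/imsetP [z zi ->]|/andP [/eqP -> _]].
  by rewrite !lf_val leader_min.
by rewrite lf_val /= ltnW.
Qed.

Lemma enum_lift : enum 'I_n.+1 = rcons (map lf (enum 'I_n)) ord_max.
Proof.
rewrite enum_ordSr; congr rcons; apply: eq_map => i; apply: val_inj.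
by symmetry; exact: lift_max.
Qed.

Lemma cycmins_lift_part :
  [seq x <- map lf (enum 'I_n) | leader s x == x] = map lf (cycmins p).
Proof.
rewrite filter_map /cycmins; congr map; apply: eq_filter => i /=.
by rewrite leader_lift (inj_eq lift_inj).
Qed.

Section CaseA.
Hypothesis fix_max : s ord_max = ord_max.

Lemma porbit_maxA : porbit s ord_max = [set ord_max].
Proof.
apply/eqP; rewrite finset.eqEsubset; apply/andP; split.
  by apply: porbit_closed; rewrite ?inE // => y /set1P ->; rewrite fix_max inE.
by rewrite finset.sub1set porbit_id.
Qed.

Lemma leader_maxA : leader s ord_max = ord_max.
Proof. by apply: leaderP; rewrite ?porbit_id // porbit_maxA => k /set1P ->. Qed.

Lemma bbA i : bb i = false.
Proof.
apply/negbTE/existsP => [[z /andP [_ /eqP E]]].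
have H : s (lf z) = s ord_max by rewrite E fix_max.
by move/perm_inj/eqP: H; rewrite eq_sym (negbTE (neq_lift _ _)).
Qed.

Lemma cycminsA : cycmins s = rcons (map lf (cycmins p)) ord_max.
Proof.
by rewrite {1}/cycmins enum_lift filter_rcons leader_maxA eqxx cycmins_lift_part.
Qed.

Lemma cyclenA : cyclen s = rcons (cyclen p) 1%N.
Proof.
rewrite /cyclen cycminsA map_rcons porbit_maxA cards1 -map_comp; congr rcons.
by apply: eq_map => i /=; rewrite card_porbit_lift bbA addn0.
Qed.

Lemma zlabA : zlab s ord_max = (size (cyclen p)).+1.
Proof.
rewrite /zlab leader_maxA cycminsA -cats1 index_cat.
have -> : (ord_max \in map lf (cycmins p)) = false.
  by apply/negbTE/mapP => [[z _ /eqP]]; rewrite (negbTE (neq_lift _ _)).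
by rewrite /= eqxx addn0 size_map size_map.
Qed.
End CaseA.

Section CaseB.
Variable aa : 'I_n.
Hypothesis s_aa : s (lf aa) = ord_max.

Lemma nfix : s ord_max != ord_max.
Proof.
apply/eqP => E; have H : s (lf aa) = s ord_max by rewrite E s_aa.
by move/perm_inj/eqP: H; rewrite eq_sym (negbTE (neq_lift _ _)).
Qed.

Lemma leader_maxB : leader s ord_max = lf (leader p aa).
Proof.
rewrite -leader_lift; apply: leader_eq; apply/eqP.
by rewrite eq_porbit_mem -{1}s_aa porbit_step.
Qed.

Lemma bbB i : bb i = (aa \in porbit p i).
Proof.
apply/existsP/idP => [[z /andP [zi /eqP E]]|ai]; last by exists aa; rewrite ai s_aa eqxx.
have H : s (lf z) = s (lf aa) by rewrite E s_aa.
by move/perm_inj/lift_inj: H => <-.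
Qed.

Lemma cycminsB : cycmins s = map lf (cycmins p).
Proof.
rewrite {1}/cycmins enum_lift filter_rcons leader_maxB.
by rewrite eq_sym (negbTE (neq_lift _ _)) cycmins_lift_part.
Qed.

Lemma cyclenB : cyclen s =
  map (fun i => #|porbit p i| + (i == leader p aa)) (cycmins p).
Proof.
rewrite /cyclen cycminsB -map_comp; apply/eq_in_map => i ic /=.
by rewrite card_porbit_lift bbB mem_porbit_cycmins.
Qed.

Lemma zlabB : zlab s ord_max = (index (leader p aa) (cycmins p)).+1.
Proof. by rewrite /zlab leader_maxB cycminsB index_map //; exact: lift_inj. Qed.
End CaseB.
End Comb.

Local Open Scope classical_set_scope.
Local Open Scope ring_scope.

Lemma null_out d (T : measurableType d) (R : realType) (P : probability T R)
  (E G : set T) : measurable E -> measurable G -> P G = 1%E ->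
  E `&` G = set0 -> P E = 0%E.
Proof.
move=> mE mG PG EG.
have h := probability_le1 P (measurableU _ _ mE mG).
have hU : P (E `|` G) = (P E + P G)%E by apply: measureU.
rewrite hU PG in h.
have e0 := measure_ge0 P E.
have : (P E <= 0)%E.
  have fE : P E \is a fin_num by apply: fin_num_measure.
  move: h e0; rewrite -(fineK fE) -EFinD !lee_fin; lra.
by move=> h2; apply/eqP; rewrite eq_le h2 e0.
Qed.

Unset Implicit Arguments.

Theorem proposition3 (d : measure_display) (T : measurableType d)
  (R : realType) (P : probability T R)
  (X : forall n : nat, T -> {perm 'I_n}) (phi : nat -> seq nat -> R) :
  (* each pi_n is a random variable (n >= 1) *)
  (forall n : nat, (0 < n)%N ->
     forall p : {perm 'I_n}, measurable (X n @^-1` [set p])) ->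
  (* consistency: pi_n = del(pi_{n+1}) almost surely *)
  (forall n : nat, (0 < n)%N ->
     P [set w | X n w = del (X n.+1 w)] = 1%E) ->
  (* exchangeability with EPPF phi *)
  is_EPPF phi ->
  (forall n : nat, (0 < n)%N -> forall p : {perm 'I_n},
     fine (P (X n @^-1` [set p]))
       = phi n (cyclen p) / (\prod_(m <- cyclen p) (m.-1)`!)%:R) ->
  (* predictive scheme *)
  forall (n : nat) (p : {perm 'I_n}), (0 < n)%N ->
  0 < fine (P (X n @^-1` [set p])) ->
  let c := cyclen p in
  let k := size c in
  let cond (s : {perm 'I_n.+1}) :=
    condP P (X n.+1 @^-1` [set s]) (X n @^-1` [set p]) in
  [/\ forall (j : nat) (s : {perm 'I_n.+1}), s \in Aset p ->
        zlab s ord_max = j -> (1 <= j <= k)%N ->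
        cond s = (nth 0%N c j.-1)%:R^-1
                 * (phi n.+1 (incr_nth c j.-1) / phi n c),
      forall s : {perm 'I_n.+1}, s \in Aset p -> zlab s ord_max = k.+1 ->
        cond s = phi n.+1 (rcons c 1%N) / phi n c &
      forall s : {perm 'I_n.+1}, s \notin Aset p -> cond s = 0].
Proof.
move=> mX cons eppf exch n p n0 Ppos c k cond.
have mB : measurable (X n @^-1` [set p]) := mX n n0 p.
have mA : forall t, measurable (X n.+1 @^-1` [set t]) := fun t => mX n.+1 (ltn0Sn n) t.
pose G := [set w | X n w = del (X n.+1 w)].
have mG : measurable G.
  have -> : G = \bigcup_(t in [set: {perm 'I_n.+1}])
      (X n.+1 @^-1` [set t] `&` X n @^-1` [set del t]).
    apply/seteqP; split => w /=.
      by move=> Hw; exists (X n.+1 w).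
    by case=> t _ [/= At Bt]; rewrite /G /= At Bt.
  apply: fin_bigcup_measurable; first exact: finite_finset.
  by move=> t _; apply: measurableI; [exact: mA | exact: mX].
have PG : P G = 1%E := cons n n0.
have key : forall t, cond t = if del t == p then
    fine (P (X n.+1 @^-1` [set t])) / fine (P (X n @^-1` [set p])) else 0.
  move=> t; rewrite /cond /condP; case: eqVneq => [E|E].
    congr (fine _ / _).
    have hD : P (X n.+1 @^-1` [set t]) = (P (X n.+1 @^-1` [set t] `\` X n @^-1` [set p])
       + P (X n.+1 @^-1` [set t] `&` X n @^-1` [set p]))%E := measureDI P (mA t) mB.
    rewrite hD (@null_out _ _ _ P (X n.+1 @^-1` [set t] `\` X n @^-1` [set p]) G) ?add0e //.
      by apply: measurableD; [exact: mA | exact: mB].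
    apply/seteqP; split => // w /= [[At nB] Gw]; apply: nB => /=.
    by rewrite Gw At E.
  rewrite (@null_out _ _ _ P _ G) ?mul0r //; first by apply: measurableI; [exact: mA | exact: mB].
  apply/seteqP; split => // w /= [[At Bw] Gw].
  by move/eqP: E; apply; rewrite -At -Gw.
have PB : fine (P (X n @^-1` [set p])) = phi n c / (\prod_(m <- c) (m.-1)`!)%:R := exch n n0 p.
have phi0 : phi n c != 0.
  by apply/eqP => h; move: Ppos; rewrite PB h mul0r ltxx.
have PA t : fine (P (X n.+1 @^-1` [set t]))
    = phi n.+1 (cyclen t) / (\prod_(m <- cyclen t) (m.-1)`!)%:R := exch n.+1 (ltn0Sn n) t.
have Fpos : forall sq : seq nat, (\prod_(m <- sq) (m.-1)`!)%:R != 0 :> R.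
  by move=> sq; rewrite pnatr_eq0 -lt0n prodn_gt0 // => *; exact: fact_gt0.
have getaa : forall s : {perm 'I_n.+1}, s ord_max != ord_max ->
    exists aa, s (lift ord_max aa) = ord_max.
  move=> s nfx; case: (unliftP ord_max ((s^-1)%g ord_max)) => [a Ha|Ha].
    by exists a; rewrite -Ha permKV.
  by move: nfx; rewrite -{1}Ha permKV eqxx.
split.
- move=> j s sA zj /andP [j1 jk].
  have dsp : del s = p by move: sA; rewrite inE => /eqP.
  rewrite key dsp eqxx PA PB.
  move: zj jk; rewrite /k /c -dsp.
  case: (eqVneq (s ord_max) ord_max) => [fx|nfx].
    by rewrite zlabA // => <-; rewrite ltnn.
  have [aa saa] := getaa s nfx.
  rewrite (zlabB saa) => <- _ /=.
  rewrite (cyclenB saa) big_map prod_incr ?uniq_cycmins ?leader_in_cycmins ?lt0n ?card_porbit_neq0 //.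
  rewrite incr_nth_map ?uniq_cycmins ?leader_in_cycmins //.
  rewrite /cyclen (nth_map (leader (del s) aa)) ?index_mem ?leader_in_cycmins //.
  rewrite nth_index ?leader_in_cycmins // big_map.
  have := Fpos (cyclen (del s)); rewrite /cyclen big_map => F0.
  have fl0 : (#|porbit (del s) (leader (del s) aa)|)%:R != 0 :> R.
    by rewrite pnatr_eq0 card_porbit_neq0.
  move: phi0; rewrite /c -dsp /cyclen => phi0.
  rewrite natrM; field.
  by rewrite F0 fl0 phi0.
- move=> s sA zk.
  have dsp : del s = p by move: sA; rewrite inE => /eqP.
  rewrite key dsp eqxx PA PB.
  move: zk; rewrite /k /c -dsp.
  case: (eqVneq (s ord_max) ord_max) => [fx|nfx]; last first.
    have [aa saa] := getaa s nfx.
    rewrite (zlabB saa) /cyclen size_map => -[] E.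
    by have := index_mem (leader (del s) aa) (cycmins (del s)); rewrite E ltnn leader_in_cycmins.
  move=> _; rewrite (cyclenA fx) -cats1 big_cat big_seq1 /= muln1.
  have F0 := Fpos (cyclen (del s)).
  move: phi0; rewrite /c -dsp => phi0.
  by field; rewrite F0 phi0.
- move=> s sA; rewrite key.
  have -> : (del s == p) = false by apply/negbTE; move: sA; rewrite inE.
  by [].
Qed.
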